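(* Let $s\in(0,1)$. Consider the eigenvalue problem for $v$ on $[0,\pi]$: $$\Big(\partial_\varphi^2+\frac{(1-2s)(1+2s)}{4}\frac{1}{\sin(\varphi)^2}-\frac{(1-2s)^2}{4}\Big)v=\lambda v \ \text{ in }[0,\pi],\qquad \lim_{\sin(\varphi)\to0}\sin(\varphi)^{1-2s}\partial_\varphi\big(\sin(\varphi)^{\frac{2s-1}{2}}v\big)=0 \ \text{ at } \varphi\in\{0,\pi\}.$$ Then the eigenvalues $\lambda$ of this problem (i.e. the values of $\lambda$ for which a nontrivial solution exists) are exactly $$\lambda_k=-\frac{(1-2s)^2}{4}-\Big(k-s+\frac12\Big)^2,\qquad k\in\mathbb{N}_{\ge0}.$$ *)

(* Defs.v *)
From Stdlib Require Import Reals.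
From Coquelicot Require Import Coquelicot.
Open Scope R_scope.

Definition pot_coef (s : R) : R := (1 - 2 * s) * (1 + 2 * s) / 4.
Definition shift_coef (s : R) : R := (1 - 2 * s) ^ 2 / 4.

(* The boundary quantity  sin(phi)^(1-2s) * d/dphi ( sin(phi)^((2s-1)/2) v(phi) ),
   meaningful for phi in (0, pi) where sin(phi) > 0. *)
Definition bdry_flux (s : R) (v : R -> R) (phi : R) : R :=
  Rpower (sin phi) (1 - 2 * s) *
  Derive (fun x => Rpower (sin x) ((2 * s - 1) / 2) * v x) phi.

Definition is_eigenfunction (s lam : R) (v : R -> R) : Prop :=
  (exists v' v'' : R -> R,
     forall phi, 0 < phi < PI ->
       is_derive v phi (v' phi) /\ is_derive v' phi (v'' phi) /\
       v'' phi + pot_coef s * / (sin phi) ^ 2 * v phi - shift_coef s * v phi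
         = lam * v phi) /\
  (exists phi, 0 < phi < PI /\ v phi <> 0) /\
  filterlim (bdry_flux s v) (at_right 0) (locally 0) /\
  filterlim (bdry_flux s v) (at_left PI) (locally 0).

Definition is_eigenvalue (s lam : R) : Prop :=
  exists v : R -> R, is_eigenfunction s lam v.

(* Main.v *)
Require Import Defs.
From Stdlib Require Import Reals Lra Classical.
From Coquelicot Require Import Coquelicot.
Open Scope R_scope.

Definition tends0R (f : R -> R) : Prop :=
  forall eps, 0 < eps -> exists del, 0 < del /\ forall x, 0 < x < del -> Rabs (f x) < eps.

Ltac unball := unfold ball in *; simpl in *; unfold AbsRing_ball, minus, plus, opp, abs in *; simpl in *.

Lemma right_to_tends (f : R -> R) :
  filterlim f (at_right 0) (locally 0) -> tends0R f.
Proof.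
  intros H eps Heps.
  destruct (proj1 (filterlim_locally f 0) H (mkposreal eps Heps)) as [d Hd].
  exists d. split; [apply cond_pos|]. intros x Hx.
  assert (H1 : ball 0 d x). { unball. rewrite Ropp_0, Rplus_0_r, Rabs_pos_eq by lra. lra. }
  specialize (Hd x H1 (proj1 Hx)). unball.
  rewrite Ropp_0, Rplus_0_r in Hd. exact Hd.
Qed.

Lemma tends_to_right (f : R -> R) :
  tends0R f -> filterlim f (at_right 0) (locally 0).
Proof.
  intros H. apply filterlim_locally. intros eps.
  destruct (H eps (cond_pos eps)) as [d [Hd Hx]].
  exists (mkposreal d Hd). intros y Hy Hy0. unball.
  rewrite Ropp_0, Rplus_0_r in *. apply Hx.
  apply Rabs_def2 in Hy. lra.
Qed.

Lemma left_to_tends (f : R -> R) :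
  filterlim f (at_left PI) (locally 0) -> tends0R (fun x => f (PI - x)).
Proof.
  intros H eps Heps.
  destruct (proj1 (filterlim_locally f 0) H (mkposreal eps Heps)) as [d Hd].
  exists d. split; [apply cond_pos|]. intros x Hx.
  assert (H1 : ball PI d (PI - x)). { unball.
    replace (PI - x + - PI) with (- x) by ring.
    rewrite Rabs_Ropp, Rabs_pos_eq by lra. lra. }
  specialize (Hd _ H1 ltac:(lra)). unball.
  rewrite Ropp_0, Rplus_0_r in Hd. exact Hd.
Qed.

Lemma tends_to_left (f : R -> R) :
  tends0R (fun x => f (PI - x)) -> filterlim f (at_left PI) (locally 0).
Proof.
  intros H. apply filterlim_locally. intros eps.
  destruct (H eps (cond_pos eps)) as [d [Hd Hx]].
  exists (mkposreal d Hd). intros y Hy Hy0. unball.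
  rewrite Ropp_0, Rplus_0_r in *.
  replace y with (PI - (PI - y)) by ring. apply Hx.
  apply Rabs_def2 in Hy. lra.
Qed.
Lemma is_derive_Rpower_sin (b x : R) : 0 < sin x ->
  is_derive (fun x => Rpower (sin x) b) x (b * Rpower (sin x) b * (cos x / sin x)).
Proof.
  intros Hs. unfold Rpower.
  auto_derive. lra. field. lra.
Qed.

Lemma mono_up (H h : R -> R) (l r : R) :
  (forall x, l < x < r -> is_derive H x (h x) /\ 0 <= h x) ->
  forall x y, l < x -> x <= y -> y < r -> H x <= H y.
Proof.
  intros Hd x y Hx Hxy Hy.
  destruct (Req_dec x y) as [->|Hne]; [lra|].
  assert (E : exists c, Rmin x y <= c <= Rmax x y /\ H y - H x = h c * (y - x)).
  { apply (MVT_gen H x y h).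
    - intros z Hz. rewrite Rmin_left in Hz by lra. rewrite Rmax_right in Hz by lra.
      apply Hd; lra.
    - intros z Hz. rewrite Rmin_left in Hz by lra. rewrite Rmax_right in Hz by lra.
      apply continuity_pt_filterlim. apply (ex_derive_continuous H).
      eexists. apply Hd; lra. }
  destruct E as [c [Hc Heq]].
  rewrite Rmin_left in Hc by lra. rewrite Rmax_right in Hc by lra.
  assert (0 <= h c) by (apply Hd; lra).
  assert (0 <= h c * (y - x)) by (apply Rmult_le_pos; lra). lra.
Qed.

Lemma mono_lim_nonneg (H h : R -> R) (d : R) :
  (forall x, 0 < x < d -> is_derive H x (h x) /\ 0 <= h x) ->
  tends0R H -> forall x, 0 < x < d -> 0 <= H x.
Proof.
  intros Hd Ht x Hx.
  apply Rnot_lt_le. intros Hneg.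
  destruct (Ht (- H x) ltac:(lra)) as [e [He Hy]].
  set (y := Rmin (x/2) (e/2)).
  assert (Hy0 : 0 < y) by (unfold y; apply Rmin_glb_lt; lra).
  assert (Hyx : y <= x) by (unfold y; pose proof (Rmin_l (x/2) (e/2)); lra).
  assert (Hye : y < e) by (unfold y; pose proof (Rmin_r (x/2) (e/2)); lra).
  specialize (Hy y ltac:(lra)).
  pose proof (mono_up H h 0 d Hd y x Hy0 Hyx (proj2 Hx)).
  apply Rabs_def2 in Hy. lra.
Qed.
Lemma tends_ext (f g : R -> R) (d0 : R) : 0 < d0 ->
  (forall x, 0 < x < d0 -> f x = g x) -> tends0R f -> tends0R g.
Proof.
  intros Hd0 He Hf eps Heps. destruct (Hf eps Heps) as [d [Hd Hx]].
  exists (Rmin d d0). split. apply Rmin_glb_lt; lra.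
  intros x Hx'. pose proof (Rmin_l d d0). pose proof (Rmin_r d d0).
  rewrite <- He by lra. apply Hx; lra.
Qed.

Lemma tends_bmul (f g : R -> R) (d0 M : R) : 0 < d0 ->
  (forall x, 0 < x < d0 -> Rabs (g x) <= M) -> tends0R f -> tends0R (fun x => f x * g x).
Proof.
  intros Hd0 Hg Hf eps Heps.
  set (M' := Rabs M + 1).
  assert (HM' : 0 < M') by (unfold M'; pose proof (Rabs_pos M); lra).
  destruct (Hf (eps / M')) as [d [Hd Hx]]. apply Rdiv_lt_0_compat; lra.
  exists (Rmin d d0). split. apply Rmin_glb_lt; lra.
  intros x Hx'. pose proof (Rmin_l d d0). pose proof (Rmin_r d d0).
  rewrite Rabs_mult.
  assert (A := Hx x ltac:(lra)). assert (B := Hg x ltac:(lra)).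
  assert (B' : Rabs (g x) <= M') by (unfold M'; pose proof (Rle_abs M); lra).
  apply Rle_lt_trans with (Rabs (f x) * M').
  apply Rmult_le_compat_l. apply Rabs_pos. exact B'.
  apply Rlt_le_trans with (eps / M' * M'). apply Rmult_lt_compat_r; lra.
  right. field. lra.
Qed.

Lemma tends_plus (f g : R -> R) : tends0R f -> tends0R g -> tends0R (fun x => f x + g x).
Proof.
  intros Hf Hg eps Heps.
  destruct (Hf (eps/2)) as [d1 [H1 H1x]]; [lra|].
  destruct (Hg (eps/2)) as [d2 [H2 H2x]]; [lra|].
  exists (Rmin d1 d2). split. apply Rmin_glb_lt; lra.
  intros x Hx. pose proof (Rmin_l d1 d2). pose proof (Rmin_r d1 d2).
  eapply Rle_lt_trans. apply Rabs_triang.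
  assert (A := H1x x ltac:(lra)). assert (B := H2x x ltac:(lra)). lra.
Qed.

Lemma Rpower_pos (x b : R) : 0 < Rpower x b.
Proof. unfold Rpower. apply exp_pos. Qed.

Lemma tends_Rpower_sin (b : R) : 0 < b -> tends0R (fun x => Rpower (sin x) b).
Proof.
  intros Hb eps Heps.
  set (d := Rmin 1 (Rpower (eps/2) (1/b))).
  assert (Hdp : 0 < d) by (unfold d; apply Rmin_glb_lt; [lra| apply Rpower_pos]).
  exists d. split; auto. intros x Hx.
  pose proof (Rmin_l 1 (Rpower (eps/2) (1/b))) as D1.
  pose proof (Rmin_r 1 (Rpower (eps/2) (1/b))) as D2. fold d in D1, D2.
  assert (Hs : 0 < sin x) by (apply sin_gt_0; pose proof PI2_3_2; lra).
  pose proof (sin_lt_x x (proj1 Hx)).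
  rewrite Rabs_pos_eq by (apply Rlt_le, Rpower_pos).
  apply Rle_lt_trans with (Rpower (Rpower (eps/2) (1/b)) b).
  apply Rle_Rpower_l. lra. split; lra.
  rewrite Rpower_mult. replace (1 / b * b) with 1 by (field; lra).
  rewrite Rpower_1; lra.
Qed.
Ltac derU H :=
  match type of H with is_derive ?g ?x ?l =>
  match goal with |- context [Derive ?f x] =>
    rewrite (is_derive_unique f x l H) end end.

Definition II (x : R) : Prop := 0 < x < PI.

Lemma PI_gt3 : 3 < PI.
Proof. pose proof PI2_3_2. lra. Qed.

Lemma sinI x : II x -> 0 < sin x.
Proof. intros [H1 H2]. apply sin_gt_0; lra. Qed.

Lemma locI x : II x -> locally x II.
Proof.
  intros [H1 H2]. assert (Hp : 0 < Rmin x (PI - x)) by (apply Rmin_glb_lt; lra).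
  exists (mkposreal _ Hp). intros y Hy. unball.
  pose proof (Rmin_l x (PI - x)). pose proof (Rmin_r x (PI - x)).
  apply Rabs_def2 in Hy. unfold II. lra.
Qed.

Lemma Derive_eqI (f g : R -> R) x : II x -> (forall t, II t -> f t = g t) -> Derive f x = Derive g x.
Proof.
  intros Hx H. apply Derive_ext_loc. eapply filter_imp; [|apply (locI x Hx)].
  intros t Ht. apply H; auto.
Qed.

Lemma is_derive_eqI (f g : R -> R) x l : II x -> (forall t, II t -> f t = g t) ->
  is_derive f x l -> is_derive g x l.
Proof.
  intros Hx H Hd. eapply is_derive_ext_loc; [|exact Hd].
  eapply filter_imp; [|apply (locI x Hx)]. intros t Ht. apply H; auto.
Qed.

Lemma is_derive_val (f : R -> R) (x l l' : R) : l = l' -> is_derive f x l -> is_derive f x l'.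
Proof. intros ->; auto. Qed.

Lemma derive_zeroI (f : R -> R) x l : II x -> (forall t, II t -> f t = 0) -> is_derive f x l -> l = 0.
Proof.
  intros Hx H Hd. assert (Hd0 : is_derive f x 0).
  { apply (is_derive_eqI (fun _ => 0)); auto. intros t Ht. rewrite H; auto.
    apply (is_derive_const (K:=R_AbsRing) 0). }
  apply is_derive_unique in Hd. apply is_derive_unique in Hd0. congruence.
Qed.

Definition Sol (a mu : R) (u : R -> R) : Prop :=
  exists u1 : R -> R, forall x, II x ->
    is_derive u x (u1 x) /\ is_derive u1 x (mu * u x - 2 * a * (cos x / sin x) * u1 x).

Definition Flux0 (a : R) (u : R -> R) : Prop :=
  tends0R (fun x => Rpower (sin x) (2 * a) * Derive u x).

Definition Bd0 (u : R -> R) : Prop :=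
  exists M d, 0 < d /\ forall x, 0 < x < d -> Rabs (u x) <= M.

Definition refl (u : R -> R) : R -> R := fun x => u (PI - x).
Definition Lad (u : R -> R) : R -> R := fun x => Derive u x / sin x.

Lemma is_derive_Ropp (f : R -> R) (x l : R) : is_derive f x l -> is_derive (fun t => - f t) x (- l).
Proof. intros H. exact (is_derive_opp f x l H). Qed.

Lemma is_derive_refl (u : R -> R) x l : is_derive u (PI - x) l -> is_derive (refl u) x (- l).
Proof.
  intros H. unfold refl.
  apply (is_derive_val _ _ (scal (-1) l)). unfold scal; simpl; unfold mult; simpl; ring.
  apply (is_derive_comp u (fun t => PI - t)). auto.
  auto_derive; auto; ring.
Qed.

Lemma II_refl x : II x -> II (PI - x).
Proof. unfold II; intros; lra. Qed.

Lemma Sol_refl a mu u : Sol a mu u -> Sol a mu (refl u).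
Proof.
  intros [u1 Hu]. exists (fun x => - u1 (PI - x)). intros x Hx.
  destruct (Hu (PI - x) (II_refl x Hx)) as [H1 H2]. split.
  - apply is_derive_refl; auto.
  - apply (is_derive_val _ _ (- - (mu * u (PI - x) - 2 * a * (cos (PI - x) / sin (PI - x)) * u1 (PI - x)))).
    + rewrite sin_PI_x, Rtrigo_facts.cos_pi_minus. unfold refl, Rdiv. ring.
    + apply (is_derive_refl (fun t => - u1 t)). apply is_derive_Ropp. auto.
Qed.

Ltac sidec := repeat (match goal with |- _ /\ _ => split | |- True => exact I
  | |- ex_derive _ _ => eexists; eassumption | |- _ <> _ => (lra || nra) | |- _ < _ => lra end).

Lemma Derive_Sol a mu u u1 x : (forall x, II x -> is_derive u x (u1 x) /\ is_derive u1 x (mu * u x - 2 * a * (cos x / sin x) * u1 x)) ->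
  II x -> Derive u x = u1 x.
Proof. intros H Hx. apply is_derive_unique. apply H; auto. Qed.

Lemma Lad_deriv a mu u u1 x : (forall x, II x -> is_derive u x (u1 x) /\ is_derive u1 x (mu * u x - 2 * a * (cos x / sin x) * u1 x)) ->
  II x -> is_derive (Lad u) x ((mu * u x * sin x - (2*a+1) * cos x * u1 x) / (sin x)^2).
Proof.
  intros Hu Hx. pose proof (sinI x Hx) as Hs. destruct (Hu x Hx) as [H1 H2].
  apply (is_derive_eqI (fun t => u1 t / sin t)); auto.
  { intros t Ht. unfold Lad. rewrite (Derive_Sol a mu u u1 t Hu Ht). auto. }
  auto_derive. sidec. derU H2. field. lra.
Qed.

Lemma Sol_Lad a mu u : Sol a mu u -> Sol (a+1) (mu + 2*a + 1) (Lad u).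
Proof.
  intros [u1 Hu].
  exists (fun x => (mu * u x * sin x - (2*a+1) * cos x * u1 x) / (sin x)^2).
  intros x Hx. pose proof (sinI x Hx) as Hs. destruct (Hu x Hx) as [H1 H2]. split.
  - apply (Lad_deriv a mu u u1 x Hu Hx).
  - auto_derive.
    + sidec.
    + derU H1. derU H2. unfold Lad. rewrite (Derive_Sol a mu u u1 x Hu Hx). field. lra.
Qed.

Lemma sc1 x : sin x ^ 2 + cos x ^ 2 = 1.
Proof. pose proof (sin2_cos2 x). unfold Rsqr in H. lra. Qed.

Lemma pw_deriv (u u1 u2 : R -> R) b :
  (forall x, II x -> is_derive u x (u1 x) /\ is_derive u1 x (u2 x)) ->
  forall x, II x ->
  is_derive (fun t => Rpower (sin t) b * u t) x (Rpower (sin x) b * (b*(cos x/sin x)*u x + u1 x)) /\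
  is_derive (fun t => Rpower (sin t) b * (b*(cos t/sin t)*u t + u1 t)) x
   (Rpower (sin x) b * (b*b*(cos x/sin x)^2*u x - b/(sin x)^2 * u x + 2*b*(cos x/sin x)*u1 x + u2 x)).
Proof.
  intros H x Hx. pose proof (sinI x Hx) as Hs. destruct (H x Hx) as [H1 H2]. split.
  - unfold Rpower. auto_derive. sidec. derU H1. field. lra.
  - apply (is_derive_val _ _ (Rpower (sin x) b * (b*b*(cos x/sin x)^2*u x - b*(sin x^2 + cos x^2)/(sin x)^2 * u x + 2*b*(cos x/sin x)*u1 x + u2 x))).
    { rewrite sc1. field. lra. }
    unfold Rpower. auto_derive. sidec. derU H1. derU H2. field. lra.
Qed.

Lemma rp_S y b : 0 < y -> Rpower y (b + 1) = Rpower y b * y.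
Proof. intros Hy. rewrite Rpower_plus, Rpower_1; auto. Qed.

Lemma cos_ge_half x : 0 <= x <= PI / 3 -> 1/2 <= cos x.
Proof.
  intros Hx. rewrite <- cos_PI3. apply cos_decr_1; pose proof PI_gt3; lra.
Qed.

Lemma is_derive_Kpow (K b x : R) : 0 < sin x ->
  is_derive (fun t => K * Rpower (sin t) (b + 1)) x (K * (b+1) * Rpower (sin x) b * cos x).
Proof.
  intros Hs. apply (is_derive_val _ _ (K * ((b+1) * Rpower (sin x) (b+1) * (cos x / sin x)))).
  { rewrite rp_S by auto. field. lra. }
  apply (is_derive_scal (fun t => Rpower (sin t) (b+1))). apply is_derive_Rpower_sin; auto.
Qed.

Lemma step0 a mu u : -1/2 < a -> Sol a mu u -> Bd0 u -> Flux0 a u ->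
  Bd0 (Lad u) /\ Flux0 (a+1) (Lad u).
Proof.
  intros Ha [u1 Hu] [M [d [Hd HM]]] Hfl.
  set (d1 := Rmin d (PI/3)).
  assert (Hd1 : 0 < d1) by (unfold d1; apply Rmin_glb_lt; pose proof PI_gt3; lra).
  assert (Hd1a : d1 <= d) by apply Rmin_l.
  assert (Hd1b : d1 <= PI/3) by apply Rmin_r.
  pose proof PI_gt3 as HPI.
  set (F := fun x => Rpower (sin x) (2*a) * u1 x).
  assert (HF : tends0R F).
  { eapply (tends_ext _ _ PI); [lra| |exact Hfl]. intros x Hx. unfold F.
    rewrite (Derive_Sol a mu u u1 x Hu Hx). auto. }
  set (K := 2 * Rabs mu * Rabs M / (2*a+1)).
  assert (HKe : K * (2*a+1) = 2 * Rabs mu * Rabs M) by (unfold K; field; lra).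
  assert (HK0 : 0 <= K).
  { unfold K. apply Rmult_le_pos. pose proof (Rabs_pos mu); pose proof (Rabs_pos M); nra.
    apply Rlt_le, Rinv_0_lt_compat; lra. }
  assert (Hmu : forall x, 0 < x < d -> Rabs (mu * u x) <= Rabs mu * Rabs M).
  { intros x Hx. rewrite Rabs_mult. apply Rmult_le_compat_l. apply Rabs_pos.
    pose proof (HM x Hx). pose proof (Rle_abs M). lra. }
  assert (HKpow : tends0R (fun x => K * Rpower (sin x) (2*a+1))).
  { eapply (tends_ext (fun x => Rpower (sin x) (2*a+1) * K) _ PI); [lra| intros; ring |].
    apply (tends_bmul _ _ PI (Rabs K)); [lra| intros; lra |].
    apply tends_Rpower_sin. lra. }
  assert (Hbound : forall x, 0 < x < d1 -> Rabs (F x) <= K * Rpower (sin x) (2*a+1)).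
  { intros x Hx.
    assert (Hgen : forall sg, sg = 1 \/ sg = -1 -> 0 <= K * Rpower (sin x) (2*a+1) - sg * F x).
    { intros sg Hsg.
      apply (mono_lim_nonneg (fun x => K * Rpower (sin x) (2*a+1) - sg * F x)
               (fun x => Rpower (sin x) (2*a) * (K*(2*a+1)*cos x - sg * (mu * u x))) d1); auto.
      - intros y Hy. assert (HyI : II y) by (unfold II; lra).
        pose proof (sinI y HyI) as Hs. destruct (Hu y HyI) as [H1 H2]. split.
        + apply (is_derive_val _ _ (K * (2*a+1) * Rpower (sin y) (2*a) * cos y -
             sg * (2*a * Rpower (sin y) (2*a) * (cos y / sin y) * u1 y + Rpower (sin y) (2*a) * (mu * u y - 2 * a * (cos y / sin y) * u1 y)))).
          { ring. }
          apply (is_derive_minus (fun t => K * Rpower (sin t) (2*a+1)) (fun t => sg * F t)).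
          apply is_derive_Kpow; auto.
          apply (is_derive_scal (fun t => F t)). unfold F.
          apply (is_derive_mult (fun t => Rpower (sin t) (2*a)) u1).
          apply is_derive_Rpower_sin; auto. auto. intros; apply Rmult_comm.
        + apply Rmult_le_pos. apply Rlt_le, Rpower_pos.
          assert (1/2 <= cos y) by (apply cos_ge_half; lra).
          pose proof (Hmu y ltac:(lra)) as Hz. rewrite HKe.
          pose proof (Rle_abs (mu * u y)) as Hz1. pose proof (Rabs_maj2 (mu * u y)) as Hz2.
          pose proof (Rabs_pos mu); pose proof (Rabs_pos M).
          assert (0 <= Rabs mu * Rabs M * (cos y - 1/2)) by (apply Rmult_le_pos; nra).
          destruct Hsg as [-> | ->]; nra.
      - eapply (tends_ext (fun x => K * Rpower (sin x) (2*a+1) + F x * (- sg)) _ PI); [lra|intros; ring|].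
        apply tends_plus; auto. apply (tends_bmul _ _ PI 1); auto. lra.
        intros; destruct Hsg as [-> | ->]; unfold Rabs; destruct Rcase_abs; lra. }
    pose proof (Hgen 1 (or_introl eq_refl)). pose proof (Hgen (-1) (or_intror eq_refl)).
    apply Rabs_le. lra. }
  split.
  - exists K, d1. split; auto. intros x Hx.
    assert (HxI : II x) by (unfold II; lra). pose proof (sinI x HxI) as Hs.
    assert (E : Lad u x = F x / Rpower (sin x) (2*a+1)).
    { unfold Lad, F. rewrite (Derive_Sol a mu u u1 x Hu HxI), rp_S by auto. field.
      split. lra. apply Rgt_not_eq, Rpower_pos. }
    rewrite E. pose proof (Hbound x Hx). pose proof (Rpower_pos (sin x) (2*a+1)).
    unfold Rdiv. rewrite Rabs_mult, Rabs_inv, (Rabs_pos_eq (Rpower _ _)) by lra.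
    apply (Rmult_le_reg_r (Rpower (sin x) (2*a+1))); auto.
    rewrite Rmult_assoc, Rinv_l by lra. lra.
  - unfold Flux0.
    eapply (tends_ext (fun x => Rpower (sin x) (2*a+1) * (mu * u x) + F x * (- (2*a+1) * cos x)) _ PI); [lra| |].
    + intros x Hx. pose proof (sinI x Hx) as Hs.
      rewrite (is_derive_unique _ _ _ (Lad_deriv a mu u u1 x Hu Hx)).
      replace (2 * (a + 1)) with ((2*a+1)+1) by ring. rewrite !rp_S by auto.
      unfold F. field. lra.
    + apply tends_plus.
      * apply (tends_bmul _ _ d (Rabs mu * Rabs M)); auto. apply tends_Rpower_sin; lra.
      * apply (tends_bmul _ _ PI (Rabs (2*a+1))); auto. lra.
        intros x Hx. rewrite Rabs_mult, Rabs_Ropp.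
        pose proof (COS_bound x). rewrite <- (Rmult_1_r (Rabs (2*a+1))) at 2.
        apply Rmult_le_compat_l. apply Rabs_pos. apply Rabs_le; lra.
Qed.

Lemma Bd0_neg (f g : R -> R) : (forall x, II x -> f x = - g x) -> Bd0 f -> Bd0 g.
Proof.
  intros He [M [d [Hd HM]]]. exists M, (Rmin d PI). split.
  apply Rmin_glb_lt; auto. pose proof PI_gt3; lra.
  intros x Hx. pose proof (Rmin_l d PI). pose proof (Rmin_r d PI).
  replace (g x) with (- f x) by (rewrite He by (unfold II; lra); ring).
  rewrite Rabs_Ropp. apply HM. lra.
Qed.

Lemma Flux0_neg b (f g : R -> R) : (forall x, II x -> f x = - g x) -> Flux0 b f -> Flux0 b g.
Proof.
  intros He Hf. unfold Flux0 in *.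
  eapply (tends_ext (fun x => Rpower (sin x) (2 * b) * Derive f x * (-1)) _ PI).
  pose proof PI_gt3; lra.
  - intros x Hx. rewrite (Derive_eqI f (fun t => - g t) x Hx He), Derive_opp. ring.
  - apply (tends_bmul _ _ PI 1). pose proof PI_gt3; lra.
    intros; unfold Rabs; destruct Rcase_abs; lra. exact Hf.
Qed.

Lemma Derive_refl_Sol a mu u u1 x : (forall x, II x -> is_derive u x (u1 x) /\ is_derive u1 x (mu * u x - 2 * a * (cos x / sin x) * u1 x)) ->
  II x -> Derive (refl u) x = - u1 (PI - x).
Proof.
  intros Hu Hx. apply is_derive_unique. apply is_derive_refl. apply Hu. apply II_refl; auto.
Qed.

Lemma step_pi a mu u : -1/2 < a -> Sol a mu u -> Bd0 (refl u) -> Flux0 a (refl u) ->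
  Bd0 (refl (Lad u)) /\ Flux0 (a+1) (refl (Lad u)).
Proof.
  intros Ha Hs Hb Hf.
  destruct (step0 a mu (refl u) Ha (Sol_refl a mu u Hs) Hb Hf) as [B F].
  destruct Hs as [u1 Hu].
  assert (E : forall x, II x -> Lad (refl u) x = - refl (Lad u) x).
  { intros x Hx. unfold Lad. rewrite (Derive_refl_Sol a mu u u1 x Hu Hx). unfold refl.
    rewrite (Derive_Sol a mu u u1 (PI - x) Hu (II_refl x Hx)), sin_PI_x.
    field. apply Rgt_not_eq, sinI; auto. }
  split. apply (Bd0_neg _ _ E B). apply (Flux0_neg _ _ _ E F).
Qed.

Lemma energy a mu u : 0 <= mu -> Sol a mu u -> Bd0 u -> Bd0 (refl u) -> Flux0 a u -> Flux0 a (refl u) ->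
  forall x, II x -> Derive u x = 0.
Proof.
  intros Hmu [u1 Hu] [M1 [d1 [Hd1 HM1]]] [M2 [d2 [Hd2 HM2]]] F1 F2.
  pose proof PI_gt3 as HPI.
  set (G := fun x => Rpower (sin x) (2*a) * u1 x * u x).
  set (g := fun x => Rpower (sin x) (2*a) * (mu * u x ^ 2 + u1 x ^ 2)).
  assert (HG : forall x, II x -> is_derive G x (g x) /\ 0 <= g x).
  { intros x Hx. pose proof (sinI x Hx) as Hs. destruct (Hu x Hx) as [H1 H2]. split.
    - apply (is_derive_val _ _ ((2*a * Rpower (sin x) (2*a) * (cos x / sin x) * u1 x + Rpower (sin x) (2*a) * (mu * u x - 2 * a * (cos x / sin x) * u1 x)) * u x + Rpower (sin x) (2*a) * u1 x * u1 x)).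
      { unfold g. ring. }
      apply (is_derive_mult (fun t => Rpower (sin t) (2*a) * u1 t) u); auto.
      apply (is_derive_mult (fun t => Rpower (sin t) (2*a)) u1); auto.
      apply is_derive_Rpower_sin; auto. intros; apply Rmult_comm. intros; apply Rmult_comm.
    - unfold g. apply Rmult_le_pos. apply Rlt_le, Rpower_pos. nra. }
  assert (L : forall x, II x -> 0 <= G x).
  { intros x Hx. apply (mono_lim_nonneg G g PI); auto.
    eapply (tends_ext (fun x => Rpower (sin x) (2 * a) * Derive u x * u x) _ PI); [lra| |].
    - intros y Hy. unfold G. rewrite (Derive_Sol a mu u u1 y Hu Hy). auto.
    - apply (tends_bmul _ _ d1 M1); auto. }
  assert (Rt : forall x, II x -> 0 <= - G (PI - x)).
  { intros x Hx. apply (mono_lim_nonneg (fun x => - G (PI - x)) (fun x => g (PI - x)) PI); auto.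
    - intros y Hy. assert (HyI : II y) by (unfold II; lra). split.
      + apply (is_derive_val _ _ (- - g (PI - y))). ring.
        apply (is_derive_Ropp (refl G)). apply is_derive_refl. apply HG. apply II_refl; auto.
      + apply HG. apply II_refl; auto.
    - eapply (tends_ext (fun x => Rpower (sin x) (2 * a) * Derive (refl u) x * refl u x) _ PI); [lra| |].
      + intros y Hy. rewrite (Derive_refl_Sol a mu u u1 y Hu Hy). unfold G, refl. rewrite sin_PI_x. ring.
      + apply (tends_bmul _ _ d2 M2); auto. }
  intros x Hx.
  assert (G0 : forall t, II t -> G t = 0).
  { intros t Ht. pose proof (L t Ht). pose proof (Rt (PI - t) (II_refl t Ht)).
    replace (PI - (PI - t)) with t in H0 by ring. lra. }
  pose proof (derive_zeroI G x (g x) Hx G0 (proj1 (HG x Hx))) as Hg0.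
  unfold g in Hg0. pose proof (Rpower_pos (sin x) (2*a)).
  assert (mu * u x ^ 2 + u1 x ^ 2 = 0).
  { apply (Rmult_eq_reg_l (Rpower (sin x) (2*a))). rewrite Hg0; ring. lra. }
  rewrite (Derive_Sol a mu u u1 x Hu Hx). nra.
Qed.

Lemma const_of_deriv0 (u : R -> R) : (forall x, II x -> is_derive u x 0) -> forall x, II x -> u x = u (PI/2).
Proof.
  intros H x Hx. pose proof PI_gt3. destruct Hx as [Hx1 Hx2].
  assert (A : forall y z, 0 < y -> y <= z -> z < PI -> u y <= u z).
  { apply (mono_up u (fun _ => 0) 0 PI). intros t Ht. split. apply H. exact Ht. lra. }
  assert (B : forall y z, 0 < y -> y <= z -> z < PI -> - u y <= - u z).
  { apply (mono_up (fun t => - u t) (fun _ => 0) 0 PI). intros t Ht. split.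
    apply (is_derive_val _ _ (- 0)). ring. apply is_derive_Ropp, H. exact Ht. lra. }
  destruct (Rle_dec x (PI/2)).
  - pose proof (A x (PI/2) ltac:(lra) ltac:(lra) ltac:(lra)).
    pose proof (B x (PI/2) ltac:(lra) ltac:(lra) ltac:(lra)). lra.
  - pose proof (A (PI/2) x ltac:(lra) ltac:(lra) ltac:(lra)).
    pose proof (B (PI/2) x ltac:(lra) ltac:(lra) ltac:(lra)). lra.
Qed.

Lemma const_mu a mu u c : Sol a mu u -> (forall x, II x -> u x = c) -> mu * c = 0.
Proof.
  intros [u1 Hu] Hc. pose proof PI_gt3.
  assert (Hx0 : II (PI/2)) by (unfold II; lra).
  assert (U1 : forall t, II t -> u1 t = 0).
  { intros t Ht. apply (derive_zeroI (fun x => u x - c) t (u1 t) Ht).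
    intros; rewrite Hc; auto; ring.
    apply (is_derive_val _ _ (u1 t - 0)). ring.
    apply (is_derive_minus u (fun _ => c)). apply Hu; auto. apply (is_derive_const (K:=R_AbsRing) c). }
  pose proof (derive_zeroI u1 (PI/2) _ Hx0 U1 (proj2 (Hu _ Hx0))).
  rewrite U1, Hc in H0 by auto. lra.
Qed.

Lemma bd_from_flux a mu u : a < 1/2 -> Sol a mu u -> Flux0 a u -> Bd0 u.
Proof.
  intros Ha [u1 Hu] Hf. pose proof PI_gt3 as HPI.
  destruct (Hf 1 ltac:(lra)) as [del [Hdel Hfd]].
  set (d1 := Rmin del (PI/3)).
  assert (Hd1 : 0 < d1) by (unfold d1; apply Rmin_glb_lt; lra).
  assert (Hd1a : d1 <= del) by apply Rmin_l.
  assert (Hd1b : d1 <= PI/3) by apply Rmin_r.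
  set (K := 2 / (1 - 2*a)).
  set (h := fun x => K * Rpower (sin x) (-(2*a) + 1)).
  assert (Hder : forall x, 0 < x < d1 -> forall sg, sg = 1 \/ sg = -1 ->
            is_derive (fun t => h t + sg * u t) x (K * (-(2*a)+1) * Rpower (sin x) (-(2*a)) * cos x + sg * u1 x)
            /\ 0 <= K * (-(2*a)+1) * Rpower (sin x) (-(2*a)) * cos x + sg * u1 x).
  { intros x Hx sg Hsg. assert (HxI : II x) by (unfold II; lra). pose proof (sinI x HxI) as Hs.
    split.
    - apply (is_derive_plus h (fun t => sg * u t)). apply is_derive_Kpow; auto.
      apply (is_derive_scal u). apply Hu; auto.
    - assert (HK : K * (-(2*a)+1) = 2) by (unfold K; field; lra). rewrite HK.
      assert (1/2 <= cos x) by (apply cos_ge_half; lra).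
      pose proof (Hfd x ltac:(lra)) as Hb. rewrite (Derive_Sol a mu u u1 x Hu HxI) in Hb.
      assert (E : Rpower (sin x) (2*a) * Rpower (sin x) (-(2*a)) = 1).
      { rewrite <- Rpower_plus. replace (2*a + - (2*a)) with 0 by ring. apply Rpower_O; auto. }
      pose proof (Rpower_pos (sin x) (-(2*a))) as P1. pose proof (Rpower_pos (sin x) (2*a)) as P2.
      assert (Hab : Rabs (u1 x) <= Rpower (sin x) (-(2*a))).
      { replace (u1 x) with ((Rpower (sin x) (2*a) * u1 x) * Rpower (sin x) (-(2*a))).
        rewrite Rabs_mult, (Rabs_pos_eq (Rpower _ (-(2*a)))) by lra.
        rewrite <- (Rmult_1_l (Rpower (sin x) (-(2*a)))) at 2.
        apply Rmult_le_compat_r; lra.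
        rewrite Rmult_comm, <- Rmult_assoc, (Rmult_comm (Rpower _ (-(2*a)))), E. ring. }
      pose proof (Rle_abs (u1 x)). pose proof (Rabs_maj2 (u1 x)).
      destruct Hsg as [-> | ->]; nra. }
  set (x0 := d1/2).
  exists (h x0 + Rabs (u x0)), x0. split. unfold x0; lra.
  intros x Hx.
  assert (M1 : forall sg, sg = 1 \/ sg = -1 -> h x + sg * u x <= h x0 + sg * u x0).
  { intros sg Hsg. apply (mono_up (fun t => h t + sg * u t) _ 0 d1 (fun y Hy => Hder y Hy sg Hsg)); unfold x0 in *; lra. }
  pose proof (M1 1 (or_introl eq_refl)). pose proof (M1 (-1) (or_intror eq_refl)).
  assert (0 <= h x) by (unfold h; apply Rmult_le_pos; [unfold K; apply Rlt_le, Rdiv_lt_0_compat; lra | apply Rlt_le, Rpower_pos]).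
  pose proof (Rle_abs (u x0)). pose proof (Rabs_maj2 (u x0)).
  apply Rabs_le. lra.
Qed.

Fixpoint W (u : R -> R) (k : nat) : R -> R :=
  match k with O => u | S k => Lad (W u k) end.

Definition muk (mu a : R) (k : nat) : R := mu + INR k * (INR k + 2 * a).

Definition Inv (a mu : R) (u : R -> R) (k : nat) : Prop :=
  Sol (a + INR k) (muk mu a k) (W u k) /\ Bd0 (W u k) /\ Bd0 (refl (W u k)) /\
  Flux0 (a + INR k) (W u k) /\ Flux0 (a + INR k) (refl (W u k)).

Lemma inv_all a mu u : -1/2 < a -> Inv a mu u 0 -> forall k, Inv a mu u k.
Proof.
  intros Ha H0 k. induction k as [|k IH]; auto.
  destruct IH as [S1 [B1 [B2 [F1 F2]]]].
  assert (Hak : -1/2 < a + INR k) by (pose proof (pos_INR k); lra).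
  destruct (step0 _ _ _ Hak S1 B1 F1) as [B3 F3].
  destruct (step_pi _ _ _ Hak S1 B2 F2) as [B4 F4].
  pose proof (Sol_Lad _ _ _ S1) as S2.
  assert (E1 : a + INR (S k) = a + INR k + 1) by (rewrite S_INR; ring).
  assert (E2 : muk mu a (S k) = muk mu a k + 2 * (a + INR k) + 1) by (unfold muk; rewrite S_INR; ring).
  unfold Inv. rewrite E1, E2. simpl. auto.
Qed.

Lemma const_of_Sol a mu u : Sol a mu u -> (forall x, II x -> Derive u x = 0) -> forall x, II x -> u x = u (PI/2).
Proof.
  intros [u1 Hu] HD. apply const_of_deriv0. intros x Hx.
  rewrite <- (HD x Hx), (Derive_Sol a mu u u1 x Hu Hx). apply Hu; auto.
Qed.

Lemma spectrum a mu u : -1/2 < a -> Inv a mu u 0 -> (exists x, II x /\ u x <> 0) ->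
  exists n : nat, muk mu a n = 0.
Proof.
  intros Ha H0 [x0 [Hx0 Hux0]].
  pose proof (inv_all a mu u Ha H0) as Hall. pose proof PI_gt3 as HPI.
  assert (Q : forall k, (exists c, forall x, II x -> W u k x = c) -> exists n, muk mu a n = 0).
  { induction k as [|k IH]; intros [c Hc].
    - exists O. destruct (Hall O) as [S0 _]. pose proof (const_mu _ _ _ c S0 Hc).
      simpl in Hc. rewrite Hc in Hux0 by auto. apply (Rmult_eq_reg_r c). lra. auto.
    - destruct (Req_dec c 0) as [Hc0|Hc0].
      + apply IH. exists (W u k (PI/2)). destruct (Hall k) as [Sk _].
        apply (const_of_Sol _ _ _ Sk). intros x Hx. specialize (Hc x Hx). simpl in Hc.
        unfold Lad in Hc. rewrite Hc0 in Hc. pose proof (sinI x Hx).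
        apply (Rmult_eq_reg_r (/ sin x)). rewrite Rmult_0_l. exact Hc.
        apply Rgt_not_eq, Rinv_0_lt_compat; auto.
      + exists (S k). destruct (Hall (S k)) as [Sk _]. pose proof (const_mu _ _ _ c Sk Hc).
        apply (Rmult_eq_reg_r c). lra. auto. }
  destruct (nfloor_ex (Rabs mu) (Rabs_pos mu)) as [n Hn].
  apply (Q (S (S n))). exists (W u (S (S n)) (PI/2)).
  destruct (Hall (S (S n))) as [S1 [B1 [B2 [F1 F2]]]].
  apply (const_of_Sol _ _ _ S1). apply (energy (a + INR (S (S n))) (muk mu a (S (S n)))); auto.
  unfold muk. rewrite !S_INR. pose proof (pos_INR n). pose proof (Rabs_maj2 mu). nra.
Qed.

Lemma only_if s lam : 0 < s < 1 -> is_eigenvalue s lam ->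
  exists k : nat, lam = - (1 - 2 * s) ^ 2 / 4 - (INR k - s + 1 / 2) ^ 2.
Proof.
  intros Hs [v [[v1 [v2 Hv]] [[x0 [Hx0 Hvx0]] [Fl0 Flpi]]]].
  pose proof PI_gt3 as HPI.
  set (a := (1 - 2*s)/2). set (mu := lam + 2 * a^2).
  assert (Hvv : forall x, II x -> is_derive v x (v1 x) /\ is_derive v1 x (v2 x)).
  { intros x Hx. destruct (Hv x Hx) as [A [B _]]. auto. }
  pose proof (pw_deriv v v1 v2 ((2 * s - 1) / 2) Hvv) as PD.
  set (w := fun x => Rpower (sin x) ((2 * s - 1) / 2) * v x).
  assert (Sw : Sol a mu w).
  { exists (fun t => Rpower (sin t) ((2 * s - 1) / 2) * (((2 * s - 1) / 2)*(cos t/sin t)*v t + v1 t)).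
    intros x Hx. destruct (PD x Hx) as [P1 P2]. split; auto.
    eapply is_derive_val; [|exact P2].
    pose proof (sinI x Hx) as Hsx. destruct (Hv x Hx) as [_ [_ Hode]].
    replace (v2 x) with (lam * v x - pot_coef s * / sin x ^ 2 * v x + shift_coef s * v x) by lra.
    assert (E : Rpower (sin x) ((2 * s - 1) / 2) *
       (((2 * s - 1) / 2) * ((2 * s - 1) / 2) * (cos x / sin x) ^ 2 * v x - ((2 * s - 1) / 2) / sin x ^ 2 * v x +
        2 * ((2 * s - 1) / 2) * (cos x / sin x) * v1 x +
        (lam * v x - pot_coef s * / sin x ^ 2 * v x + shift_coef s * v x)) -
      (mu * w x - 2 * a * (cos x / sin x) *
        (Rpower (sin x) ((2 * s - 1) / 2) * (((2 * s - 1) / 2) * (cos x / sin x) * v x + v1 x)))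
      = - Rpower (sin x) ((2 * s - 1) / 2) * v x * a^2 / sin x ^ 2 * (sin x ^ 2 + cos x ^ 2 - 1)).
    { unfold w, mu, a, pot_coef, shift_coef. field. lra. }
    rewrite sc1 in E. lra. }
  assert (Hw1 : forall x, II x -> is_derive w x (Rpower (sin x) ((2 * s - 1) / 2) * (((2 * s - 1) / 2)*(cos x/sin x)*v x + v1 x))).
  { intros x Hx. apply PD; auto. }
  assert (F0 : Flux0 a w).
  { apply right_to_tends in Fl0. unfold Flux0.
    eapply (tends_ext (bdry_flux s v) _ PI); [lra| |exact Fl0].
    intros x Hx. unfold bdry_flux, a. replace (2 * ((1 - 2 * s) / 2)) with (1 - 2*s) by field. reflexivity. }
  assert (Fpi : Flux0 a (refl w)).
  { apply left_to_tends in Flpi. unfold Flux0.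
    eapply (tends_ext (fun x => bdry_flux s v (PI - x) * (-1)) _ PI); [lra| |].
    - intros x Hx. unfold bdry_flux.
      rewrite (is_derive_unique _ _ _ (is_derive_refl w x _ (Hw1 (PI - x) (II_refl x Hx)))).
      pose proof (Hw1 (PI - x) (II_refl x Hx)) as HH. derU HH.
      rewrite sin_PI_x. unfold a. replace (2 * ((1 - 2 * s) / 2)) with (1 - 2*s) by field.
      unfold w. ring.
    - apply (tends_bmul _ _ PI 1); [lra| |auto]. intros; unfold Rabs; destruct Rcase_abs; lra. }
  assert (Ha1 : a < 1/2) by (unfold a; lra).
  assert (Ha2 : -1/2 < a) by (unfold a; lra).
  assert (B0 : Bd0 w) by (apply (bd_from_flux a mu); auto).
  assert (Bpi : Bd0 (refl w)) by (apply (bd_from_flux a mu); auto; apply Sol_refl; auto).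
  assert (I0 : Inv a mu w 0).
  { unfold Inv. simpl W. replace (a + INR 0) with a by (simpl; ring).
    replace (muk mu a 0) with mu by (unfold muk; simpl; ring). auto. }
  assert (NT : exists x, II x /\ w x <> 0).
  { exists x0. split; auto. unfold w. pose proof (Rpower_pos (sin x0) ((2*s-1)/2)).
    intros HH. apply Rmult_integral in HH. destruct HH; [lra|auto]. }
  destruct (spectrum a mu w Ha2 I0 NT) as [n Hn].
  exists n. unfold muk, mu, a in Hn.
  assert (Hl : lam = - 2 * ((1 - 2 * s) / 2) ^ 2 - INR n * (INR n + 2 * ((1 - 2 * s) / 2))) by lra.
  rewrite Hl. field.
Qed.

Fixpoint cc (a : R) (n k : nat) : R :=
  match k with
  | O => if Nat.even n then 1 else 0
  | S O => if Nat.even n then 0 else 1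
  | S (S j) => cc a n j * (INR j * (INR j + 2*a) - INR n * (INR n + 2*a)) / ((INR j + 1) * (INR j + 2))
  end.

Fixpoint P0 a n N y := match N with O => 0 | S N' => P0 a n N' y + cc a n N' * y ^ N' end.
Fixpoint P1 a n N y := match N with O => 0 | S N' => P1 a n N' y + INR N' * cc a n N' * y ^ (N' - 1) end.
Fixpoint P2 a n N y := match N with O => 0 | S N' => P2 a n N' y + INR N' * (INR N' - 1) * cc a n N' * y ^ (N' - 2) end.

Lemma P0_deriv a n N y : is_derive (P0 a n N) y (P1 a n N y).
Proof.
  induction N as [|N IH]; simpl.
  - auto_derive; auto.
  - apply (is_derive_plus (P0 a n N) (fun y => cc a n N * y ^ N)); auto.
    destruct N as [|N]; auto_derive; auto; simpl; rewrite ?Nat.sub_0_r; ring.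
Qed.

Lemma P1_deriv a n N y : is_derive (P1 a n N) y (P2 a n N y).
Proof.
  induction N as [|N IH]; simpl.
  - auto_derive; auto.
  - apply (is_derive_plus (P1 a n N) (fun y => INR N * cc a n N * y ^ (N - 1))); auto.
    destruct N as [|[|N]]; auto_derive; auto; simpl; rewrite ?Nat.sub_0_r, ?S_INR; ring.
Qed.

Definition EE a n N y := (1 - y^2) * P2 a n N y - (2*a+1) * y * P1 a n N y + INR n * (INR n + 2*a) * P0 a n N y.

Lemma EE_form a n j y :
  EE a n (S (S j)) y =
  cc a n (S j) * (INR n * (INR n + 2*a) - INR (S j) * (INR (S j) + 2*a)) * y ^ (S j) +
  cc a n j * (INR n * (INR n + 2*a) - INR j * (INR j + 2*a)) * y ^ j.
Proof.
  induction j as [|j IH].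
  - unfold EE. cbn [P0 P1 P2 pow Nat.sub]. rewrite S_INR. simpl INR. ring.
  - unfold EE in *.
    set (c2 := cc a n (S (S j))).
    assert (Hrec : c2 * ((INR j + 1) * (INR j + 2)) = cc a n j * (INR j * (INR j + 2*a) - INR n * (INR n + 2*a))).
    { unfold c2. cbn [cc]. pose proof (pos_INR j). field. split; lra. }
    transitivity ((1 - y^2) * P2 a n (S (S j)) y - (2*a+1) * y * P1 a n (S (S j)) y + INR n * (INR n + 2*a) * P0 a n (S (S j)) y
      + c2 * ((1-y^2)*INR (S(S j))*(INR(S(S j))-1)*y^j - (2*a+1)*INR(S(S j))*y^(S(S j)) + INR n*(INR n+2*a)*y^(S (S j)))).
    { cbn [P0 P1 P2]. fold c2.
      replace (S (S j) - 1)%nat with (S j) by reflexivity. replace (S (S j) - 2)%nat with j by (simpl; rewrite Nat.sub_0_r; reflexivity).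
      cbn [pow]. ring. }
    rewrite IH.
    assert (Hrec' : cc a n j * (INR n * (INR n + 2*a) - INR j * (INR j + 2*a)) = - (c2 * ((INR j + 1) * (INR j + 2)))) by (rewrite Hrec; ring).
    rewrite Hrec'. fold c2. cbn [pow]. rewrite !S_INR. ring.
Qed.

Lemma cc_parity a n : forall m,
  (Nat.even m = negb (Nat.even n) -> cc a n m = 0) /\
  (Nat.even (S m) = negb (Nat.even n) -> cc a n (S m) = 0).
Proof.
  induction m as [|m [IH1 IH2]].
  - split; intros H; cbn [cc]; destruct (Nat.even n); simpl in H; try discriminate; reflexivity.
  - split; auto. intros H. cbn [cc]. rewrite IH1. unfold Rdiv; ring.
    simpl in H. exact H.
Qed.

Lemma cc_vanish a n : cc a n (S n) = 0 /\ cc a n (S (S n)) = 0.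
Proof.
  split.
  - apply (proj1 (cc_parity a n (S n))). rewrite Nat.even_succ, Nat.negb_even. reflexivity.
  - cbn [cc]. unfold Rdiv. ring.
Qed.

Lemma EE_zero a n y : EE a n (S (S (S n))) y = 0.
Proof.
  rewrite EE_form. destruct (cc_vanish a n) as [H1 H2]. rewrite H1, H2. ring.
Qed.

Lemma P0_at0 a n m : P0 a n (S m) 0 = cc a n 0.
Proof.
  induction m as [|m IH]. simpl. ring.
  cbn [P0] in *. rewrite IH. cbn [pow]. ring.
Qed.

Lemma P1_at0 a n m : P1 a n (S (S m)) 0 = cc a n 1.
Proof.
  induction m as [|m IH]. simpl. ring.
  cbn [P1] in *. rewrite IH. replace (S (S m) - 1)%nat with (S m) by reflexivity. cbn [pow]. ring.
Qed.

Fixpoint BB a n N := match N with O => 0 | S N' => BB a n N' + Rabs (INR N' * cc a n N') end.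

Lemma P1_bound a n N y : Rabs y <= 1 -> Rabs (P1 a n N y) <= BB a n N.
Proof.
  intros Hy. induction N as [|N IH]; simpl.
  - rewrite Rabs_R0. lra.
  - eapply Rle_trans. apply Rabs_triang. apply Rplus_le_compat; auto.
    rewrite Rabs_mult, <- RPow_abs.
    assert (Rabs y ^ (N - 1) <= 1).
    { generalize (N - 1)%nat. intros k. induction k; simpl. lra.
      pose proof (Rabs_pos y). nra. }
    pose proof (Rabs_pos (INR N * cc a n N)). pose proof (pow_le (Rabs y) (N-1) (Rabs_pos y)). nra.
Qed.

Definition Q0 a k y := P0 a k (S (S (S k))) y.
Definition Q1 a k y := P1 a k (S (S (S k))) y.
Definition Q2 a k y := P2 a k (S (S (S k))) y.
Arguments Q0 : simpl never.
Arguments Q1 : simpl never.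
Arguments Q2 : simpl never.

Lemma Q0_deriv a k y : is_derive (Q0 a k) y (Q1 a k y).
Proof. apply P0_deriv. Qed.
Lemma Q1_deriv a k y : is_derive (Q1 a k) y (Q2 a k y).
Proof. apply P1_deriv. Qed.
Lemma QE a k y : (1 - y^2) * Q2 a k y - (2*a+1) * y * Q1 a k y + INR k * (INR k + 2*a) * Q0 a k y = 0.
Proof. apply EE_zero. Qed.
Lemma Q0_at0 a k : Q0 a k 0 = cc a k 0.
Proof. apply P0_at0. Qed.
Lemma Q1_at0 a k : Q1 a k 0 = cc a k 1.
Proof. apply P1_at0. Qed.
Lemma Q1_bound a k y : Rabs y <= 1 -> Rabs (Q1 a k y) <= BB a k (S (S (S k))).
Proof. apply P1_bound. Qed.

Lemma if_dir s k : 0 < s < 1 ->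
  is_eigenvalue s (- (1 - 2 * s) ^ 2 / 4 - (INR k - s + 1 / 2) ^ 2).
Proof.
  intros Hs. pose proof PI_gt3 as HPI.
  set (a := (1 - 2*s)/2). 
  set (mu := - (INR k * (INR k + 2*a))).
  set (w := fun x => Q0 a k (cos x)).
  set (w1 := fun x => - sin x * Q1 a k (cos x)).
  set (w2 := fun x => mu * w x - 2 * a * (cos x / sin x) * w1 x).
  assert (Hwd : forall x, II x -> is_derive w x (w1 x) /\ is_derive w1 x (w2 x)).
  { intros x Hx. pose proof (sinI x Hx) as Hsx.
    pose proof (Q0_deriv a k (cos x)) as D0. pose proof (Q1_deriv a k (cos x)) as D1. split.
    - unfold w, w1. auto_derive. sidec. derU D0. ring.
    - apply (is_derive_val _ _ (mu * w x + 2 * a * cos x * Q1 a k (cos x))).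
      { unfold w2, w1. field. lra. }
      unfold w1. auto_derive. sidec. derU D1.
      pose proof (QE a k (cos x)) as E0.
      assert (Z : (sin x ^ 2 + cos x ^ 2 - 1) * Q2 a k (cos x) = 0) by (rewrite sc1; ring).
      unfold mu, w. nra. }
  pose proof (pw_deriv w w1 w2 a Hwd) as PD.
  set (v := fun x => Rpower (sin x) a * w x).
  assert (Hinv : forall x, II x -> Rpower (sin x) ((2 * s - 1) / 2) * v x = w x).
  { intros x Hx. unfold v. rewrite <- Rmult_assoc, <- Rpower_plus.
    replace ((2 * s - 1) / 2 + a) with 0 by (unfold a; field). rewrite Rpower_O. ring.
    apply sinI; auto. }
  assert (HD : forall x, II x -> Derive (fun x => Rpower (sin x) ((2 * s - 1) / 2) * v x) x = w1 x).
  { intros x Hx. rewrite (Derive_eqI _ w x Hx Hinv). apply is_derive_unique. apply Hwd; auto. }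
  assert (Hfl : forall x, II x -> bdry_flux s v x = Rpower (sin x) ((1 - 2*s) + 1) * (- Q1 a k (cos x))).
  { intros x Hx. unfold bdry_flux. rewrite HD by auto. unfold w1. rewrite rp_S by (apply sinI; auto). ring. }
  assert (Hexp : 0 < (1 - 2*s) + 1) by lra.
  exists v. split; [|split; [|split]].
  - exists (fun x => Rpower (sin x) a * (a*(cos x/sin x)*w x + w1 x)).
    exists (fun x => Rpower (sin x) a * (a*a*(cos x/sin x)^2*w x - a/(sin x)^2 * w x + 2*a*(cos x/sin x)*w1 x + w2 x)).
    intros phi Hphi. destruct (PD phi Hphi) as [P1' P2']. split; [exact P1'|split; [exact P2'|]].
    pose proof (sinI phi Hphi) as Hsx.
    assert (E : Rpower (sin phi) a * (a*a*(cos phi/sin phi)^2*w phi - a/(sin phi)^2 * w phi + 2*a*(cos phi/sin phi)*w1 phi + w2 phi)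
      + pot_coef s * / sin phi ^ 2 * v phi - shift_coef s * v phi
      - (- (1 - 2 * s) ^ 2 / 4 - (INR k - s + 1 / 2) ^ 2) * v phi
      = Rpower (sin phi) a * w phi * a^2 / sin phi ^ 2 * (sin phi ^ 2 + cos phi ^ 2 - 1)).
    { unfold w2, v, mu, a, pot_coef, shift_coef. field. lra. }
    rewrite sc1 in E. lra.
  - apply Classical_Prop.NNPP. intros Hno.
    assert (Hz : forall x, II x -> w x = 0).
    { intros x Hx. destruct (Req_dec (w x) 0) as [|Hne]; auto. exfalso. apply Hno.
      exists x. split; auto. unfold v. pose proof (Rpower_pos (sin x) a).
      intros HH. apply Rmult_integral in HH. destruct HH; [lra|auto]. }
    assert (Hx0 : II (PI/2)) by (unfold II; lra).
    pose proof (Hz _ Hx0) as Z0. unfold w in Z0. rewrite cos_PI2 in Z0. rewrite Q0_at0 in Z0.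
    pose proof (derive_zeroI w (PI/2) (w1 (PI/2)) Hx0 Hz (proj1 (Hwd _ Hx0))) as Z1.
    unfold w1 in Z1. rewrite cos_PI2, sin_PI2 in Z1. rewrite Q1_at0 in Z1.
    cbn [cc] in Z0, Z1. destruct (Nat.even k); lra.
  - apply tends_to_right.
    eapply (tends_ext (fun x => Rpower (sin x) ((1 - 2*s) + 1) * (- Q1 a k (cos x))) _ PI); [lra| |].
    + intros x Hx. rewrite Hfl; auto.
    + apply (tends_bmul _ _ PI (BB a k (S (S (S k))))); [lra| |apply tends_Rpower_sin; auto].
      intros x Hx. rewrite Rabs_Ropp. apply Q1_bound. apply Rabs_le. apply COS_bound.
  - apply tends_to_left.
    eapply (tends_ext (fun x => Rpower (sin x) ((1 - 2*s) + 1) * (- Q1 a k (cos (PI - x)))) _ PI); [lra| |].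
    + intros x Hx. rewrite Hfl by (apply II_refl; auto). rewrite sin_PI_x. auto.
    + apply (tends_bmul _ _ PI (BB a k (S (S (S k))))); [lra| |apply tends_Rpower_sin; auto].
      intros x Hx. rewrite Rabs_Ropp. apply Q1_bound. apply Rabs_le. apply COS_bound.
Qed.

Theorem mainTheorem8 (s : R) (hs : 0 < s < 1) (lam : R) :
  is_eigenvalue s lam <->
  exists k : nat, lam = - (1 - 2 * s) ^ 2 / 4 - (INR k - s + 1 / 2) ^ 2.
Proof.
  split.
  - apply only_if; auto.
  - intros [k ->]. apply if_dir; auto.
Qed.
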